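(* Let $\mathcal{X},\mathcal{Y}$ be finite alphabets, let $W=W_{Y|X}$ be a channel from $\mathcal{X}$ to $\mathcal{Y}$, and for $P_0,P_1\in\Delta(\mathcal{X})$ let $Q_i(y)=\sum_x P_i(x)W(y|x)$. Then the SDPI coefficient $$\eta^J_\infty(W)=\sup_{P_0,P_1\in\Delta(\mathcal{X})}\frac{D^J_\infty(Q_0,Q_1)}{D^J_\infty(P_0,P_1)}$$ is achieved by binary input distributions, i.e., the supremum is unchanged when restricted to pairs $(P_0,P_1)$ supported on a common set of at most two elements of $\mathcal{X}$.
   Context: $\Delta(\mathcal{X})$ is the probability simplex on $\mathcal{X}$. $D_\infty(P\|Q)=\log\max_x\frac{P(x)}{Q(x)}$, and the Jeffreys–Rényi divergence of order infinity is $D^J_\infty(P,Q)=D_\infty(P\|Q)+D_\infty(Q\|P)$. *)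

(* Defs.v *)
From HB Require Import structures.
From mathcomp Require Import all_boot all_order all_algebra.
From mathcomp Require Import all_classical all_reals all_analysis.
Set Implicit Arguments. Unset Strict Implicit. Unset Printing Implicit Defensive.
Import Order.TTheory GRing.Theory Num.Theory.
Local Open Scope ring_scope.
Local Open Scope classical_set_scope.

Section Defs.
Variable R : realType.

Definition is_dist (T : finType) (P : T -> R) : Prop :=
  (forall x, 0 <= P x) /\ \sum_(x : T) P x = 1.

Definition is_channel (X Y : finType) (W : X -> Y -> R) : Prop :=
  forall x, is_dist (W x).

Definition out (X Y : finType) (W : X -> Y -> R) (P : X -> R) : Y -> R :=
  fun y => \sum_(x : X) P x * W x y.

(* D_oo(P||Q) = log max_x P(x)/Q(x), = +oo if P(x)>0 = Q(x) for some x
   (terms with P(x) = 0 contribute ratio 0). *)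
Definition Dinf (T : finType) (P Q : T -> R) : \bar R :=
  if [exists x, (0 < P x) && (Q x == 0)] then +oo%E
  else (ln (\big[Num.max/0]_(x : T) (P x / Q x)))%:E.

Definition DJinf (T : finType) (P Q : T -> R) : \bar R :=
  (Dinf P Q + Dinf Q P)%E.

Definition sdpi_ratio (X Y : finType) (W : X -> Y -> R) (P0 P1 : X -> R) : \bar R :=
  (fine (DJinf (out W P0) (out W P1)) / fine (DJinf P0 P1))%:E.

Definition admissible (X : finType) (P0 P1 : X -> R) : Prop :=
  is_dist P0 /\ is_dist P1 /\ (0 < DJinf P0 P1)%E /\ (DJinf P0 P1 < +oo)%E.

Definition eta_J_inf (X Y : finType) (W : X -> Y -> R) : \bar R :=
  ereal_sup [set r | exists P0 P1 : X -> R,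
    admissible P0 P1 /\ r = sdpi_ratio W P0 P1].

Definition binary_supported (X : finType) (P0 P1 : X -> R) : Prop :=
  exists a b : X, forall x, x != a -> x != b -> P0 x = 0 /\ P1 x = 0.

Definition eta_J_inf_binary (X Y : finType) (W : X -> Y -> R) : \bar R :=
  ereal_sup [set r | exists P0 P1 : X -> R,
    admissible P0 P1 /\ binary_supported P0 P1 /\ r = sdpi_ratio W P0 P1].

End Defs.

(* Main.v *)
Require Import Defs.
From mathcomp Require Import all_boot all_order all_algebra.
From mathcomp Require Import all_classical all_reals all_analysis.
From mathcomp Require Import ring lra.
Set Implicit Arguments. Unset Strict Implicit. Unset Printing Implicit Defensive.
Import Order.TTheory GRing.Theory Num.Theory.
Local Open Scope ring_scope.

Section S.
Variable R : realType.

Definition mx (T : finType) (P Q : T -> R) : R := \big[Num.max/0]_(x : T) (P x / Q x).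

Lemma mx_ge (T : finType) (P Q : T -> R) x : P x / Q x <= mx P Q.
Proof. exact: le_bigmax. Qed.

Lemma mx_le (T : finType) (P Q : T -> R) c : 0 <= c -> (forall x, P x / Q x <= c) -> mx P Q <= c.
Proof. by move=> c0 H; apply: bigmax_le. Qed.

Lemma mx_arg (T : finType) (x0 : T) (P Q : T -> R) :
  (forall x, 0 <= P x / Q x) -> exists y, mx P Q = P y / Q y.
Proof.
move=> H; eexists; rewrite /mx (bigmax_eq_arg _ x0) //; by move=> i _; apply: H.
Qed.

Lemma Dinf_fin (T : finType) (P Q : T -> R) :
  (forall x, 0 < P x -> 0 < Q x) -> Dinf P Q = (ln (mx P Q))%:E.
Proof.
move=> H; rewrite /Dinf; case: ifP => // /existsP [x /andP [Px /eqP Qx]].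
by have := H x Px; rewrite Qx ltxx.
Qed.

Lemma bounded_DJ (T : finType) (P0 P1 : T -> R) a b : 0 <= a -> 0 <= b ->
  (forall x, 0 <= P0 x) -> (forall x, 0 <= P1 x) ->
  (forall x, P0 x <= a * P1 x) -> (forall x, P1 x <= b * P0 x) ->
  [/\ DJinf P0 P1 = (ln (mx P0 P1) + ln (mx P1 P0))%:E, mx P0 P1 <= a & mx P1 P0 <= b].
Proof.
move=> a0 b0 h0 h1 H0 H1.
have S01 : forall x, 0 < P0 x -> 0 < P1 x.
  move=> x px; have := H0 x; have := h1 x; nra.
have S10 : forall x, 0 < P1 x -> 0 < P0 x.
  move=> x px; have := H1 x; have := h0 x; nra.
split.
- by rewrite /DJinf (Dinf_fin S01) (Dinf_fin S10).
- apply: mx_le => // x; have [->|nz] := eqVneq (P1 x) 0; first by rewrite invr0 mulr0.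
  have p1 : 0 < P1 x by rewrite lt_neqAle eq_sym nz h1.
  by rewrite ler_pdivrMr.
- apply: mx_le => // x; have [->|nz] := eqVneq (P0 x) 0; first by rewrite invr0 mulr0.
  have p1 : 0 < P0 x by rewrite lt_neqAle eq_sym nz h0.
  by rewrite ler_pdivrMr.
Qed.


Lemma out_ge0 (X Y : finType) (W : X -> Y -> R) P :
  (forall x y, 0 <= W x y) -> (forall x, 0 <= P x) -> forall y, 0 <= out W P y.
Proof. by move=> hW hP y; apply: sumr_ge0 => x _; rewrite mulr_ge0. Qed.

Lemma out_le (X Y : finType) (W : X -> Y -> R) P0 P1 a :
  (forall x y, 0 <= W x y) -> (forall x, P0 x <= a * P1 x) ->
  forall y, out W P0 y <= a * out W P1 y.
Proof.
move=> hW H y; rewrite /out mulr_sumr; apply: ler_sum => x _.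
by rewrite mulrA ler_wpM2r.
Qed.

Lemma out_ge_term (X Y : finType) (W : X -> Y -> R) P x y :
  (forall x y, 0 <= W x y) -> (forall x, 0 <= P x) -> P x * W x y <= out W P y.
Proof.
move=> hW hP; rewrite /out (bigD1 x) //= lerDl; apply: sumr_ge0 => z _.
by rewrite mulr_ge0.
Qed.

Definition ind2 (X : finType) (a b : X) (c1 c2 : R) : X -> R :=
  fun x => (x == a)%:R * c1 + (x == b)%:R * c2.

Lemma sum_ind (X : finType) (a : X) (F : X -> R) : \sum_x (x == a)%:R * F x = F a.
Proof.
rewrite (bigD1 a) //= eqxx mul1r big1 ?addr0 // => x /negbTE ->; by rewrite mul0r.
Qed.

Lemma sum_ind2 (X : finType) (a b : X) c1 c2 : \sum_x ind2 a b c1 c2 x = c1 + c2.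
Proof.
rewrite /ind2 big_split /=.
by rewrite (sum_ind a (fun _ => c1)) (sum_ind b (fun _ => c2)).
Qed.

Lemma out_ind2 (X Y : finType) (W : X -> Y -> R) (a b : X) c1 c2 y :
  out W (ind2 a b c1 c2) y = c1 * W a y + c2 * W b y.
Proof.
rewrite /out /ind2.
under eq_bigr do rewrite mulrDl -!mulrA.
by rewrite big_split /= (sum_ind a (fun x => c1 * W x y)) (sum_ind b (fun x => c2 * W x y)).
Qed.

Lemma dist_pos (X : finType) (P : X -> R) : is_dist P -> exists x, 0 < P x.
Proof.
case=> h0 h1; apply/not_existsP => H.
have : \sum_x P x = 0 by apply: big1 => x _; apply/eqP; rewrite eq_le h0 andbT leNgt; apply/negP/H.
by rewrite h1; apply/eqP; rewrite oner_eq0.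
Qed.


Lemma adm_facts (T : finType) (P0 P1 : T -> R) : admissible P0 P1 ->
 [/\ 0 < mx P0 P1, 0 < mx P1 P0, 1 < mx P0 P1 * mx P1 P0,
   (DJinf P0 P1 = (ln (mx P0 P1) + ln (mx P1 P0))%:E)
   & (forall x, P0 x <= mx P0 P1 * P1 x /\ P1 x <= mx P1 P0 * P0 x)].
Proof.
case=> [[h0 s0] [[h1 s1] [pos fin]]].
have N01 : ~~ [exists x, (0 < P0 x) && (P1 x == 0)].
  apply/negP => E; move: fin; rewrite /DJinf /Dinf E; case: ifP => _ //.
have N10 : ~~ [exists x, (0 < P1 x) && (P0 x == 0)].
  apply/negP => E; move: fin; rewrite /DJinf /Dinf E; case: ifP => _ //.
have S01 : forall x, 0 < P0 x -> 0 < P1 x.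
  move=> x px; move/existsPn: N01 => /(_ x); rewrite px /= => nz.
  by rewrite lt_neqAle eq_sym nz h1.
have S10 : forall x, 0 < P1 x -> 0 < P0 x.
  move=> x px; move/existsPn: N10 => /(_ x); rewrite px /= => nz.
  by rewrite lt_neqAle eq_sym nz h0.
have B01 : forall x, P0 x <= mx P0 P1 * P1 x.
  move=> x; have [px|] := ltP 0 (P0 x).
    by have := mx_ge P0 P1 x; rewrite ler_pdivrMr // S01.
  move=> le0; apply: (le_trans le0); rewrite mulr_ge0 //.
  by apply: (le_trans _ (mx_ge P0 P1 x)); rewrite divr_ge0.
have B10 : forall x, P1 x <= mx P1 P0 * P0 x.
  move=> x; have [px|] := ltP 0 (P1 x).
    by have := mx_ge P1 P0 x; rewrite ler_pdivrMr // S10.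
  move=> le0; apply: (le_trans le0); rewrite mulr_ge0 //.
  by apply: (le_trans _ (mx_ge P1 P0 x)); rewrite divr_ge0.
have [x0 px0] := dist_pos (conj h0 s0).
have [x1 px1] := dist_pos (conj h1 s1).
have a0 : 0 < mx P0 P1.
  by apply: (lt_le_trans _ (mx_ge P0 P1 x0)); rewrite divr_gt0 // S01.
have b0 : 0 < mx P1 P0.
  by apply: (lt_le_trans _ (mx_ge P1 P0 x1)); rewrite divr_gt0 // S10.
have DJ : DJinf P0 P1 = (ln (mx P0 P1) + ln (mx P1 P0))%:E.
  by rewrite /DJinf (Dinf_fin S01) (Dinf_fin S10).
split=> //.
move: pos; rewrite DJ lte_fin -lnM ?posrE // => pos.
by rewrite ltNge; apply/negP => /ln_le0; rewrite leNgt pos.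
Qed.


Lemma ind2_ge0 (X : finType) (a b : X) c1 c2 : 0 <= c1 -> 0 <= c2 -> forall x, 0 <= ind2 a b c1 c2 x.
Proof. by move=> h1 h2 x; rewrite /ind2 addr_ge0 // mulr_ge0 // ler0n. Qed.

Lemma pos_comb (c d u v : R) : 0 < c -> 0 < d -> 0 <= u -> 0 <= v -> 0 < u + v -> 0 < c*u + d*v.
Proof.
move=> c0 d0 u0 v0 uv; have [u_pos|] := ltP 0 u.
  by apply: ltr_wpDr; [rewrite mulr_ge0 // ltW | rewrite mulr_gt0].
move=> u_le; have ue : u = 0 by apply/le_anti; rewrite u_le u0.
move: uv; rewrite ue add0r mulr0 add0r => vp; exact: mulr_gt0.
Qed.

Lemma binary_pair (X Y : finType) (W : X -> Y -> R) (a b : X) (al be la mu : R) y1 y2 :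
 is_channel W -> a != b -> 0 < al -> 0 < be -> 1 < al*be -> 0 < la -> 0 < mu ->
 0 < W a y1 + W b y1 -> 0 < W a y2 + W b y2 ->
 exists P0' P1', admissible P0' P1' /\ binary_supported P0' P1' /\
   ((ln ((al*la*W a y1 + mu*W b y1)/(la*W a y1 + be*mu*W b y1) *
         ((la*W a y2 + be*mu*W b y2)/(al*la*W a y2 + mu*W b y2))) / ln (al*be))%:E
     <= sdpi_ratio W P0' P1')%E.
Proof.
move=> hW ab al0 be0 ab1 la0 mu0 w1 w2.
have Wge0 : forall x y, 0 <= W x y by move=> x y; case: (hW x) => h _; exact: h.
have wa1 := Wge0 a y1; have wb1 := Wge0 b y1; have wa2 := Wge0 a y2; have wb2 := Wge0 b y2.
set Z0 := al*la + mu; set Z1 := la + be*mu.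
have Z00 : 0 < Z0 by rewrite /Z0; nra.
have Z10 : 0 < Z1 by rewrite /Z1; nra.
have Z0n : Z0 != 0 by apply: lt0r_neq0.
have Z1n : Z1 != 0 by apply: lt0r_neq0.
have lan : la != 0 by apply: lt0r_neq0.
have mun : mu != 0 by apply: lt0r_neq0.
have aln : al != 0 by apply: lt0r_neq0.
have ben : be != 0 by apply: lt0r_neq0.
set P0' := ind2 a b (al*la/Z0) (mu/Z0); set P1' := ind2 a b (la/Z1) (be*mu/Z1).
set K0 := al*Z1/Z0; set K1 := be*Z0/Z1.
have K00 : 0 < K0 by rewrite /K0 !divr_gt0 // mulr_gt0.
have K10 : 0 < K1 by rewrite /K1 !divr_gt0 // mulr_gt0.
have ba : (b == a) = false by rewrite eq_sym (negbTE ab).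
have P0a : P0' a = al*la/Z0 by rewrite /P0' /ind2 eqxx (negbTE ab) mul1r mul0r addr0.
have P1a : P1' a = la/Z1 by rewrite /P1' /ind2 eqxx (negbTE ab) mul1r mul0r addr0.
have P0b : P0' b = mu/Z0 by rewrite /P0' /ind2 eqxx ba mul1r mul0r add0r.
have P1b : P1' b = be*mu/Z1 by rewrite /P1' /ind2 eqxx ba mul1r mul0r add0r.
have P0o : forall x, x != a -> x != b -> P0' x = 0.
  by move=> x xa xb; rewrite /P0' /ind2 (negbTE xa) (negbTE xb) !mul0r addr0.
have P1o : forall x, x != a -> x != b -> P1' x = 0.
  by move=> x xa xb; rewrite /P1' /ind2 (negbTE xa) (negbTE xb) !mul0r addr0.
have h0 : forall x, 0 <= P0' x.
  by apply: ind2_ge0; apply: divr_ge0; nra.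
have h1 : forall x, 0 <= P1' x.
  by apply: ind2_ge0; apply: divr_ge0; nra.
have B01 : forall x, P0' x <= K0 * P1' x.
  move=> x; have [->|xa] := eqVneq x a.
    rewrite P0a P1a /K0 le_eqVlt; apply/orP; left; apply/eqP; field.
    by by rewrite ?Z0n ?Z1n ?lan ?mun ?aln ?ben.
  have [->|xb] := eqVneq x b; last by rewrite P0o // P1o // mulr0.
  rewrite P0b P1b (_ : K0 * (be * mu / Z1) = (al*be) * (mu/Z0)); last first.
    by rewrite /K0; field; rewrite ?Z0n ?Z1n ?lan ?mun ?aln ?ben.
  by apply: ler_peMl; [apply: divr_ge0; nra | exact: ltW].
have B10 : forall x, P1' x <= K1 * P0' x.
  move=> x; have [->|xa] := eqVneq x a.
    rewrite P0a P1a (_ : K1 * (al * la / Z0) = (al*be) * (la/Z1)); last first.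
      by rewrite /K1; field; rewrite ?Z0n ?Z1n ?lan ?mun ?aln ?ben.
    by apply: ler_peMl; [apply: divr_ge0; nra | exact: ltW].
  have [->|xb] := eqVneq x b; last by rewrite P0o // P1o // mulr0.
  rewrite P0b P1b /K1 le_eqVlt; apply/orP; left; apply/eqP; field.
  by by rewrite ?Z0n ?Z1n ?lan ?mun ?aln ?ben.
have [DJP m01 m10] := bounded_DJ (ltW K00) (ltW K10) h0 h1 B01 B10.
have e01 : mx P0' P1' = K0.
  apply/le_anti; rewrite m01 /=; have := mx_ge P0' P1' a; rewrite P0a P1a.
  by rewrite (_ : al * la / Z0 / (la / Z1) = K0) //; rewrite /K0;  field;
    rewrite ?Z0n ?Z1n ?lan ?mun ?aln ?ben.
have e10 : mx P1' P0' = K1.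
  apply/le_anti; rewrite m10 /=; have := mx_ge P1' P0' b; rewrite P0b P1b.
  by rewrite (_ : be * mu / Z1 / (mu / Z0) = K1) //; rewrite /K1;  field;
    rewrite ?Z0n ?Z1n ?lan ?mun ?aln ?ben.
have lnK : ln K0 + ln K1 = ln (al * be).
  rewrite -lnM ?posrE // (_ : K0 * K1 = al * be) // /K0 /K1; field.
  by by rewrite ?Z0n ?Z1n ?lan ?mun ?aln ?ben.
have lnab : 0 < ln (al * be) by apply: ln_gt0.
exists P0', P1'; split; [|split].
- split; [split => //|split; [split => //|]].
    by rewrite sum_ind2 -mulrDl divff // lt0r_neq0.
    by rewrite sum_ind2 -mulrDl divff // lt0r_neq0.
  by rewrite DJP e01 e10 lnK lte_fin ltry.
- by exists a, b => x xa xb; rewrite P0o // P1o.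
have hQ0 := out_ge0 Wge0 h0; have hQ1 := out_ge0 Wge0 h1.
have BQ01 := out_le Wge0 B01; have BQ10 := out_le Wge0 B10.
have [DJQ _ _] := bounded_DJ (ltW K00) (ltW K10) hQ0 hQ1 BQ01 BQ10.
rewrite /sdpi_ratio DJQ DJP /= e01 e10 lnK lee_fin.
rewrite ler_pM2r ?invr_gt0 //.
have ala : 0 < al * la by rewrite mulr_gt0.
have bem : 0 < be * mu by rewrite mulr_gt0.
have N1 := pos_comb ala mu0 wa1 wb1 w1.
have D1 := pos_comb la0 bem wa1 wb1 w1.
have N2 := pos_comb la0 bem wa2 wb2 w2.
have D2 := pos_comb ala mu0 wa2 wb2 w2.
have c1 : 0 < al * la / Z0 by rewrite divr_gt0.
have c2 : 0 < mu / Z0 by rewrite divr_gt0.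
have c3 : 0 < la / Z1 by rewrite divr_gt0.
have c4 : 0 < be * mu / Z1 by rewrite divr_gt0.
have q01 : 0 < out W P0' y1 by rewrite out_ind2; apply: pos_comb.
have q11 : 0 < out W P1' y1 by rewrite out_ind2; apply: pos_comb.
have q02 : 0 < out W P0' y2 by rewrite out_ind2; apply: pos_comb.
have q12 : 0 < out W P1' y2 by rewrite out_ind2; apply: pos_comb.
have r1p : 0 < out W P0' y1 / out W P1' y1 by rewrite divr_gt0.
have r2p : 0 < out W P1' y2 / out W P0' y2 by rewrite divr_gt0.
have N1n := lt0r_neq0 N1; have D1n := lt0r_neq0 D1.
have N2n := lt0r_neq0 N2; have D2n := lt0r_neq0 D2.
rewrite (_ : _ * _ = out W P0' y1 / out W P1' y1 * (out W P1' y2 / out W P0' y2)); last first.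
  rewrite !out_ind2; field.
  by rewrite ?Z0n ?Z1n ?lan ?mun ?aln ?ben ?N1n ?D1n ?N2n ?D2n.
rewrite lnM ?posrE //; apply: lerD; rewrite ler_ln ?posrE //.
- exact: mx_ge.
- exact: lt_le_trans r1p (mx_ge _ _ _).
- exact: mx_ge.
- exact: lt_le_trans r2p (mx_ge _ _ _).
Qed.


Lemma div_pos (x y : R) : 0 <= x -> 0 <= y -> 0 < x / y -> 0 < x /\ 0 < y.
Proof.
move=> x0 y0 h; have [y_pos|] := ltP 0 y.
  by split=> //; have := h; rewrite pmulr_lgt0 // invr_gt0.
move=> yle; have ye : y = 0 by apply/le_anti; rewrite yle y0.
by move: h; rewrite ye invr0 mulr0 ltxx.
Qed.

Lemma exists_argmax (T : finType) (x0 : T) (F : T -> R) : exists a, forall x, F x <= F a.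
Proof.
case: (@arg_maxP _ _ _ x0 predT F isT) => a _ H.
by exists a => x; apply: H.
Qed.

Lemma sum_pos_term (T : finType) (F : T -> R) : 0 < \sum_x F x -> exists x, 0 < F x.
Proof.
move=> h; apply/not_existsP => H; move: h; apply/negP; rewrite -leNgt.
by apply: sumr_le0 => x _; rewrite leNgt; apply/negP/H.
Qed.

Lemma lin_out (X Y : finType) (W : X -> Y -> R) c P P' y :
  c * out W P y - out W P' y = \sum_x (c * P x - P' x) * W x y.
Proof.
rewrite /out mulr_sumr -sumrB; apply: eq_bigr => x _; ring.
Qed.

Lemma exists_gt (T : finType) (P0 P1 : T -> R) : is_dist P0 -> is_dist P1 ->
  1 < mx P0 P1 * mx P1 P0 -> exists x, P1 x < P0 x.
Proof.
move=> [h0 s0] [h1 s1] H; apply/not_existsP => N.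
have le : forall x, P0 x <= P1 x by move=> x; rewrite leNgt; apply/negP/N.
have eq : forall x, P1 x - P0 x = 0.
  move=> x; apply: (@psumr_eq0P _ _ predT (fun x => P1 x - P0 x)) => //.
    by move=> i _; rewrite subr_ge0.
  by rewrite sumrB s0 s1 subrr.
have E : forall x, P1 x = P0 x by move=> x; apply/eqP; rewrite -subr_eq0 eq.
have r1 : forall (P : T -> R) x, P x / P x <= 1.
  move=> P x; have [->|nz] := eqVneq (P x) 0; first by rewrite mul0r.
  by rewrite divff.
have m1 : mx P0 P1 <= 1 by apply: mx_le => // x; rewrite E r1.
have m2 : mx P1 P0 <= 1 by apply: mx_le => // x; rewrite E r1.
have [x0 _] := dist_pos (conj h0 s0).
have m10 : 0 <= mx P0 P1 by apply: (le_trans _ (mx_ge P0 P1 x0)); rewrite divr_ge0.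
have m20 : 0 <= mx P1 P0 by apply: (le_trans _ (mx_ge P1 P0 x0)); rewrite divr_ge0.
have := ler_pM m10 m20 m1 m2; rewrite mulr1 => L.
by move: H; rewrite ltNge L.
Qed.


Lemma main_step (X Y : finType) (W : X -> Y -> R) (P0 P1 : X -> R) :
  is_channel W -> admissible P0 P1 ->
  exists P0' P1', admissible P0' P1' /\ binary_supported P0' P1' /\
    (sdpi_ratio W P0 P1 <= sdpi_ratio W P0' P1')%E.
Proof.
move=> hW adm.
have [[h0 s0] [[h1 s1] _]] := adm.
have [al0 be0 ab1 DJP Bs] := adm_facts adm.
have B01 : forall x, P0 x <= mx P0 P1 * P1 x by move=> x; case: (Bs x).
have B10 : forall x, P1 x <= mx P1 P0 * P0 x by move=> x; case: (Bs x).
move: al0 be0 ab1 DJP B01 B10; set al := mx P0 P1; set be := mx P1 P0.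
move=> al0 be0 ab1 DJP B01 B10.
have Wge0 : forall x y, 0 <= W x y by move=> x y; case: (hW x) => h _; exact: h.
have hQ0 := out_ge0 Wge0 h0; have hQ1 := out_ge0 Wge0 h1.
have BQ01 := out_le Wge0 B01; have BQ10 := out_le Wge0 B10.
have [DJQ _ _] := bounded_DJ (ltW al0) (ltW be0) hQ0 hQ1 BQ01 BQ10.
have [x0 px0] := dist_pos (conj h0 s0).
have [y0 wy0] := dist_pos (hW x0).
have q0y0 : 0 < out W P0 y0.
  by apply: (lt_le_trans _ (@out_ge_term _ _ W P0 x0 y0 Wge0 h0)); rewrite mulr_gt0.
have q1y0 : 0 < out W P1 y0 by have := BQ01 y0; have := hQ1 y0; nra.
have rnn : forall (P Q : Y -> R), (forall y, 0 <= P y) -> (forall y, 0 <= Q y) ->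
    forall y, 0 <= P y / Q y by move=> P Q hP hQ y; rewrite divr_ge0.
have [y1 e1] := mx_arg y0 (rnn _ _ hQ0 hQ1).
have [y2 e2] := mx_arg y0 (rnn _ _ hQ1 hQ0).
have m1p : 0 < out W P0 y1 / out W P1 y1.
  by rewrite -e1; apply: (lt_le_trans _ (mx_ge _ _ y0)); rewrite divr_gt0.
have m2p : 0 < out W P1 y2 / out W P0 y2.
  by rewrite -e2; apply: (lt_le_trans _ (mx_ge _ _ y0)); rewrite divr_gt0.
have [q01p q11p] := div_pos (hQ0 y1) (hQ1 y1) m1p.
have [q12p q02p] := div_pos (hQ1 y2) (hQ0 y2) m2p.
have b11 := BQ01 y1; have b12 := BQ10 y1; have b21 := BQ01 y2; have b22 := BQ10 y2.
have lnab : 0 < ln (al * be) by apply: ln_gt0.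
have gen : sdpi_ratio W P0 P1 =
   ((ln (out W P0 y1 / out W P1 y1 * (out W P1 y2 / out W P0 y2))) / ln (al * be))%:E.
  by rewrite /sdpi_ratio DJQ DJP /= e1 e2 -!lnM ?posrE.
rewrite gen.
have [triv|nontriv] := leP (out W P0 y1 * out W P1 y2) (out W P1 y1 * out W P0 y2).
- have [xa hxa] := exists_gt (conj h0 s0) (conj h1 s1) ab1.
  have ab1' : 1 < mx P1 P0 * mx P0 P1 by rewrite mulrC.
  have [xb hxb] := exists_gt (conj h1 s1) (conj h0 s0) ab1'.
  have ab : xa != xb.
    by apply/eqP => E; move: hxa hxb; rewrite E => H1 H2; have := lt_trans H1 H2; rewrite ltxx.
  have [y wy] := dist_pos (hW xa).
  have wb := Wge0 xb y.
  have pos : 0 < W xa y + W xb y by lra.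
  have [P0' [P1' [adm' [bin' le']]]] :=
    binary_pair (y1:=y) (y2:=y) hW ab al0 be0 ab1 ltr01 ltr01 pos pos.
  exists P0', P1'; split=> //; split=> //; apply: le_trans le'.
  rewrite lee_fin.
  set N := (al * 1 * W xa y + 1 * W xb y); set D := (1 * W xa y + be * 1 * W xb y).
  have Np : 0 < N by rewrite /N; apply: pos_comb; rewrite ?mulr1.
  have Dp : 0 < D by rewrite /D; apply: pos_comb; rewrite ?mulr1.
  rewrite (_ : N / D * (D / N) = 1); last first.
    by rewrite mulf_div [N * D]mulrC divff // mulf_neq0 // lt0r_neq0.
  rewrite ln1 mul0r.
  apply: mulr_le0_ge0; last by rewrite invr_ge0 ltW.
  apply: ln_le0; rewrite mulf_div ler_pdivrMr ?mul1r // mulr_gt0 //.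
have A1p : 0 < be * out W P0 y1 - out W P1 y1 by nra.
have B2p : 0 < al * out W P1 y2 - out W P0 y2 by nra.
have B1n : 0 <= al * out W P1 y1 - out W P0 y1 by lra.
have A2n : 0 <= be * out W P0 y2 - out W P1 y2 by lra.
have [xu hxu] : exists x, 0 < W x y1.
  have := q01p; rewrite /out => /sum_pos_term [x hx]; exists x.
  by have := h0 x; have := Wge0 x y1; nra.
have [xw hxw] : exists x, 0 < W x y2.
  have := q02p; rewrite /out => /sum_pos_term [x hx]; exists x.
  by have := h0 x; have := Wge0 x y2; nra.
have [a Ha] := exists_argmax xu (fun x => W x y1 / (W x y1 + W x y2)).
have [b Hb] := exists_argmax xw (fun x => W x y2 / (W x y1 + W x y2)).
have ua : 0 < W a y1.
  have := Ha xu; have := Wge0 xu y2 => w2 /=.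
  have t0 : 0 < W xu y1 / (W xu y1 + W xu y2) by rewrite divr_gt0 //; lra.
  move/(lt_le_trans t0) => t1.
  have [] := div_pos (Wge0 a y1) _ t1 => //; have := Wge0 a y2; have := Wge0 a y1; lra.
have wb : 0 < W b y2.
  have := Hb xw; have := Wge0 xw y1 => w2 /=.
  have t0 : 0 < W xw y2 / (W xw y1 + W xw y2) by rewrite divr_gt0 //; lra.
  move/(lt_le_trans t0) => t1.
  have [] := div_pos (Wge0 b y2) _ t1 => //; have := Wge0 b y2; have := Wge0 b y1; lra.
have cra : forall x, W x y1 * W a y2 <= W a y1 * W x y2.
  move=> x; have := Ha x => /=; have ux := Wge0 x y1; have wx := Wge0 x y2.
  have wa := Wge0 a y2.
  have [sp|sn] := ltP 0 (W x y1 + W x y2); last by move=> _; nra.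
  have sa : 0 < W a y1 + W a y2 by lra.
  by rewrite ler_pdivrMr // mulrAC ler_pdivlMr //; nra.
have crb : forall x, W x y2 * W b y1 <= W b y2 * W x y1.
  move=> x; have := Hb x => /=; have ux := Wge0 x y1; have wx := Wge0 x y2.
  have ub := Wge0 b y1.
  have [sp|sn] := ltP 0 (W x y1 + W x y2); last by move=> _; nra.
  have sa : 0 < W b y1 + W b y2 by lra.
  by rewrite ler_pdivrMr // mulrAC ler_pdivlMr //; nra.
have SA : (be * out W P0 y1 - out W P1 y1) * W a y2 <=
          W a y1 * (be * out W P0 y2 - out W P1 y2).
  rewrite !lin_out mulr_suml mulr_sumr; apply: ler_sum => x _.
  have := cra x; have := B10 x; have := Wge0 x y1; have := Wge0 x y2; nra.
have SB : W b y1 * (al * out W P1 y2 - out W P0 y2) <=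
          (al * out W P1 y1 - out W P0 y1) * W b y2.
  rewrite !lin_out mulr_suml mulr_sumr; apply: ler_sum => x _.
  have := crb x; have := B01 x; have := Wge0 x y1; have := Wge0 x y2; nra.
have ab : a != b.
  apply/eqP => E; move: crb; rewrite -E => crb'.
  have eqx : forall x, W x y1 * W a y2 = W a y1 * W x y2.
    by move=> x; apply/le_anti; rewrite cra /=; have := crb' x; nra.
  have L : forall P, out W P y1 * W a y2 = W a y1 * out W P y2.
    move=> P; rewrite /out mulr_suml mulr_sumr; apply: eq_bigr => x _.
    by rewrite -mulrA eqx; ring.
  have L0 := L P0; have L1 := L P1.
  have : W a y1 * (out W P0 y1 * out W P1 y2) = W a y1 * (out W P1 y1 * out W P0 y2).
    by rewrite mulrCA -L1 mulrCA -[in RHS]mulrCA -L0; ring.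
  by move/(mulfI (lt0r_neq0 ua)) => E2; move: nontriv; rewrite E2 ltxx.
set la := (be * out W P0 y1 - out W P1 y1) / W a y1.
set mu := (al * out W P1 y2 - out W P0 y2) / W b y2.
have la0 : 0 < la by rewrite divr_gt0.
have mu0 : 0 < mu by rewrite divr_gt0.
have pos1 : 0 < W a y1 + W b y1 by have := Wge0 b y1; lra.
have pos2 : 0 < W a y2 + W b y2 by have := Wge0 a y2; lra.
have [P0' [P1' [adm' [bin' le']]]] :=
  binary_pair (y1:=y1) (y2:=y2) hW ab al0 be0 ab1 la0 mu0 pos1 pos2.
exists P0', P1'; split=> //; split=> //; apply: le_trans le'.
rewrite lee_fin ler_pM2r ?invr_gt0 //.
have hla : la * W a y1 = be * out W P0 y1 - out W P1 y1 by rewrite /la divfK // lt0r_neq0.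
have hmu : mu * W b y2 = al * out W P1 y2 - out W P0 y2 by rewrite /mu divfK // lt0r_neq0.
have hc : mu * W b y1 <= al * out W P1 y1 - out W P0 y1.
  by rewrite /mu mulrAC ler_pdivrMr // mulrC.
have hd : la * W a y2 <= be * out W P0 y2 - out W P1 y2.
  by rewrite /la mulrAC ler_pdivrMr // [X in _ <= X]mulrC.
have c0 : 0 <= mu * W b y1 by rewrite mulr_ge0 // ltW.
have d0 : 0 <= la * W a y2 by rewrite mulr_ge0 // ltW.
rewrite -/la -/mu -!(mulrA al la) -!(mulrA be mu) hla hmu.
move: hc hd c0 d0; set c := mu * W b y1; set d := la * W a y2 => hc hd c0 d0.
have n1 : 0 < al * (be * out W P0 y1 - out W P1 y1) + c by nra.
have d1 : 0 < (be * out W P0 y1 - out W P1 y1) + be * c by nra.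
have n2 : 0 < d + be * (al * out W P1 y2 - out W P0 y2) by nra.
have d2 : 0 < al * d + (al * out W P1 y2 - out W P0 y2) by nra.
rewrite ler_ln ?posrE ?mulr_gt0 ?divr_gt0 //.
apply: ler_pM; [exact: ltW|exact: ltW| |].
- rewrite ler_pdivrMr // mulrAC ler_pdivlMr //.
  have h := hc; rewrite -subr_ge0 in h; have := mulr_ge0 (ltW A1p) h; nra.
- rewrite ler_pdivrMr // mulrAC ler_pdivlMr //.
  have h := hd; rewrite -subr_ge0 in h; have := mulr_ge0 (ltW B2p) h; nra.
all: by rewrite invr_gt0.
Qed.

End S.

Unset Implicit Arguments.

Theorem theorem4p3 (R : realType) (X Y : finType) (W : X -> Y -> R) :
  is_channel W -> eta_J_inf W = eta_J_inf_binary W.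
Proof.
move=> hW; rewrite /eta_J_inf /eta_J_inf_binary; apply/le_anti/andP; split.
- apply: ge_ereal_sup => r [P0 [P1 [adm ->]]].
  have [P0' [P1' [adm' [bin' le']]]] := main_step hW adm.
  apply: (le_trans le'); by apply: ereal_sup_ubound; exists P0', P1'.
- apply: ge_ereal_sup => r [P0 [P1 [adm [bin ->]]]].
  by apply: ereal_sup_ubound; exists P0, P1.
Qed.
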